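(* Let $\epsilon_{fp},\delta_{fp},\epsilon_{fn},\delta_{fn}\in(0,1)$, $n,m\ge1$, and let $Z_{nm}=(x_1,\dots,x_n)\sim\mathcal D_{nm}^n$ and $Z_{ano}=(x'_1,\dots,x'_m)\sim\mathcal D_{ano}^m$. Let $\hat y_{ad}$ be the combined predictor defined in the context and define its error rate (over non-abstained predictions) $$\mathrm{ERR}=\Pr_{(x,y)\sim\mathcal D}\big(\hat y_{ad}(x)\ne *\ \text{and}\ \hat y_{ad}(x)\ne y\big).$$ Then, with $\epsilon_{ad}=\max(\epsilon_{fp},\epsilon_{fn})$ and $\delta_{ad}=\delta_{fp}+\delta_{fn}$, $$\Pr_{Z_{nm},Z_{ano}}\Big[\hat\tau_{fn}<\hat\tau_{fp}\ \text{ or }\ \mathrm{ERR}\le\epsilon_{ad}\Big]\ \ge\ 1-\delta_{ad},$$ i.e. with probability at least $1-\delta_{ad}$ over the calibration data, whenever $\hat\tau_{fn}\ge\hat\tau_{fp}$ the error rate is at most $\epsilon_{ad}$.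
   Context: Let $\mathcal X$ be a measurable space and $d:\mathcal X\to\mathbb R$ a fixed measurable anomaly-score function (independent of the calibration data). Let $\mathcal D$ be a distribution on $\mathcal X\times\{0,1\}$ (label $1$ = anomaly, $0$ = normal) with $0<\Pr(y=1)<1$; $\mathcal D_{nm}$ and $\mathcal D_{ano}$ are the conditional distributions of $x$ given $y=0$ and $y=1$. Assume the distributions of $d(x)$ under $\mathcal D_{nm}$ and under $\mathcal D_{ano}$ have no atoms. For $N\ge1$, $\epsilon,\delta\in(0,1)$: $F(k;N,\epsilon)=\sum_{i=0}^{k}\binom{N}{i}\epsilon^i(1-\epsilon)^{N-i}$, $F(-1;N,\epsilon)=0$, $k^*(N,\epsilon,\delta)=\max\{k\in\{-1,\dots,N\}:F(k;N,\epsilon)\le\delta\}$. Let $k^*_{fp}=k^*(n,\epsilon_{fp},\delta_{fp})$, $\hat\tau_{fp}$ = the $(k^*_{fp}+1)$-th largest of $d(x_1),\dots,d(x_n)$ ($0$-th largest $=+\infty$); $k^*_{fn}=k^*(m,\epsilon_{fn},\delta_{fn})$, $\hat\tau_{fn}$ = the $(k^*_{fn}+1)$-th smallest of $d(x'_1),\dots,d(x'_m)$ ($0$-th smallest $=-\infty$). Prediction sets: $C_{\hat\tau_{fp}}(x)=\{1\}$ if $d(x)\ge\hat\tau_{fp}$, else $\{0,1\}$; $C_{\hat\tau_{fn}}(x)=\{0,1\}$ if $d(x)\ge\hat\tau_{fn}$, else $\{0\}$. Combined set $C_{ad}(x)=C_{\hat\tau_{fn}}(x)\cap C_{\hat\tau_{fp}}(x)$,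 and $\hat y_{ad}(x)=1$ if $C_{ad}(x)=\{1\}$, $\hat y_{ad}(x)=0$ if $C_{ad}(x)=\{0\}$, and $\hat y_{ad}(x)=*$ (abstain) otherwise. *)

(* Defs.v *)
From mathcomp Require Import all_boot all_order all_algebra.
From mathcomp Require Import all_classical all_reals all_analysis.
Set Implicit Arguments. Unset Strict Implicit. Unset Printing Implicit Defensive.
Import Order.TTheory GRing.Theory Num.Theory.
Local Open Scope classical_set_scope.
Local Open Scope ring_scope.

Section Defs.
Context {R : realType}.

Definition binom_cdf (N : nat) (eps : R) (k : int) : R :=
  match k with
  | Posz k' => \sum_(0 <= i < k'.+1) ('C(N, i))%:R * eps ^+ i * (1 - eps) ^+ (N - i)
  | Negz _ => 0
  end.

(* kstar1 N eps delta = k^*(N, eps, delta) + 1, where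
   k^* = max { k in {-1, ..., N} : F(k; N, eps) <= delta }.
   The index j = k + 1 ranges over {0, ..., N+1}; j = 0 (k = -1) always
   qualifies since F(-1) = 0 <= delta. *)
Definition kstar1 (N : nat) (eps delta : R) : nat :=
  \big[maxn/0%N]_(j < N.+2 | (binom_cdf N eps (j%:Z - 1)%R <= delta)%R) (j : nat).

(* j-th largest / j-th smallest element of a finite list of reals, with the
   conventions 0-th largest = +oo and 0-th smallest = -oo.
   (For j > size s the value is irrelevant: never used since k^* < N.) *)
Definition kth_largest (s : seq R) (j : nat) : \bar R :=
  if j is j'.+1 then (nth 0 (sort (fun x y : R => y <= x) s) j')%:E else +oo%E.
Definition kth_smallest (s : seq R) (j : nat) : \bar R :=
  if j is j'.+1 then (nth 0 (sort (fun x y : R => x <= y) s) j')%:E else -oo%E.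

Context {dX : measure_display} {X : measurableType dX}.

Definition tau_fp (sc : X -> R) (n : nat) (xs : 'I_n -> X) (eps delta : R) : \bar R :=
  kth_largest [seq sc (xs i) | i <- enum 'I_n] (kstar1 n eps delta).

Definition tau_fn (sc : X -> R) (m : nat) (xs : 'I_m -> X) (eps delta : R) : \bar R :=
  kth_smallest [seq sc (xs j) | j <- enum 'I_m] (kstar1 m eps delta).

(* Labels: true = 1 = anomaly, false = 0 = normal. *)
Definition C_fp (sc : X -> R) (tfp : \bar R) (x : X) : {set bool} :=
  if (tfp <= (sc x)%:E)%E then [set true]%SET else [set: bool]%SET.
Definition C_fn (sc : X -> R) (tfn : \bar R) (x : X) : {set bool} :=
  if (tfn <= (sc x)%:E)%E then [set: bool]%SET else [set false]%SET.
Definition C_ad sc tfn tfp (x : X) : {set bool} := (C_fn sc tfn x :&: C_fp sc tfp x)%SET.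

(* Some b = predicted label b; None = abstain ( * ). *)
Definition yhat_ad sc tfn tfp (x : X) : option bool :=
  if C_ad sc tfn tfp x == [set true]%SET then Some true
  else if C_ad sc tfn tfp x == [set false]%SET then Some false
  else None.

Definition ERR (D : probability (X * bool)%type R) sc tfn tfp : \bar R :=
  D [set p : X * bool | yhat_ad sc tfn tfp p.1 <> None /\
                        yhat_ad sc tfn tfp p.1 <> Some p.2].

(* Conditional distribution of x given y = b:  D_nm = Dcond D false,
   D_ano = Dcond D true. *)
Definition Dcond (D : probability (X * bool)%type R) (b : bool) (A : set X) : \bar R :=
  (fine (D (A `*` [set b])) / fine (D ([set: X] `*` [set b])))%:E.

(* (Z_1..Z_n, Z'_1..Z'_m) defined on (Omega, P) are mutually independent,
   Z_i ~ D_nm and Z'_j ~ D_ano, i.e. their joint law is D_nm^n (x) D_ano^m. *)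
Definition iid_calibration {dO : measure_display} {Omega : measurableType dO}
    (P : probability Omega R) (D : probability (X * bool)%type R)
    (n m : nat) (Z : 'I_n -> Omega -> X) (Z' : 'I_m -> Omega -> X) : Prop :=
  (forall i, measurable_fun setT (Z i)) /\
  (forall j, measurable_fun setT (Z' j)) /\
  forall (A : 'I_n -> set X) (B : 'I_m -> set X),
    (forall i, measurable (A i)) -> (forall j, measurable (B j)) ->
    P ((\bigcap_(i in [set: 'I_n]) (Z i @^-1` A i)) `&`
       (\bigcap_(j in [set: 'I_m]) (Z' j @^-1` B j))) =
    ((\prod_(i < n) Dcond D false (A i)) * (\prod_(j < m) Dcond D true (B j)))%E.

End Defs.

(* Main.v *)
Require Import Defs.
From HB Require Import structures.
From mathcomp Require Import all_boot all_order all_algebra.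
From mathcomp Require Import all_classical all_reals all_analysis.
From mathcomp Require Import measurable_realfun.
From mathcomp Require Import zify lra.
Import Order.TTheory GRing.Theory Num.Theory.
Local Open Scope classical_set_scope.
Local Open Scope ring_scope.


Section Aux.
Context {R : realType}.

Lemma kstar1P (N : nat) (eps delta : R) :
  kstar1 N eps delta = 0%N \/
  binom_cdf N eps ((kstar1 N eps delta)%:Z - 1) <= delta.
Proof.
rewrite /kstar1; apply: (big_ind (fun x : nat => x = 0%N \/ binom_cdf N eps (x%:Z - 1) <= delta)).
- by left.
- move=> x y Hx Hy; rewrite /maxn; case: (ltnP x y) => h //.
- by move=> j Pj; right.
Qed.

Lemma nth_sort_ge (s : seq R) (t : R) (J : nat) : (0 < J)%N ->
  (J <= count (fun x : R => (t <= x)%R) s)%N ->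
  t <= nth 0 (sort (fun x y : R => y <= x) s) J.-1.
Proof.
move=> J0 HJ.
set s' := sort _ s.
have ps : count (fun x : R => (t <= x)%R) s' = count (fun x : R => (t <= x)%R) s.
  by apply/permP; rewrite perm_sort.
have tot : total (fun x y : R => y <= x) by move=> x y; rewrite le_total.
have tr : transitive (fun x y : R => y <= x) by move=> x y z h1 h2; exact: le_trans h2 h1.
have srt : sorted (fun x y : R => y <= x) s' := sort_sorted tot s.
have sz : size s' = size s by rewrite size_sort.
have Jsz : (J.-1 < size s')%N.
  rewrite sz; have := count_size (fun x : R => (t <= x)%R) s; lia.
rewrite leNgt; apply/negP => lt_nth.
have : (count (fun x : R => (t <= x)%R) s' <= J.-1)%N.
  rewrite -(cat_take_drop J.-1 s') count_cat (drop_nth 0 Jsz) /=.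
  have srtd : sorted (fun x y : R => y <= x) (drop J.-1 s').
    exact: (subseq_sorted tr (drop_subseq _ _) srt).
  rewrite (drop_nth 0 Jsz) /= in srtd.
  have := order_path_min tr srtd => /allP Hall.
  have -> : count (fun x : R => (t <= x)%R) (drop J.-1.+1 s') = 0%N.
    apply/eqP; rewrite -leqn0 leqNgt -has_count; apply/negP => /hasP [y yin ty].
    have := Hall _ yin => /= yle.
    by move: lt_nth; rewrite ltNge (le_trans ty yle).
  rewrite leNgt lt_nth /= add0n addn0.
  have := count_size (fun x : R => (t <= x)%R) (take J.-1 s'); rewrite size_take Jsz; lia.
rewrite ps; lia.
Qed.

End Aux.


Section CondMeasure.
Local Open Scope ereal_scope.
Context {R : realType} {dX : measure_display} {X : measurableType dX}.
Variables (D : probability (X * bool)%type R) (b : bool).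

Definition cm (A : set X) : \bar R :=
  ((fine (D ([set: X] `*` [set b])))^-1)%:E * D (A `*` [set b]).

Let cm0 : cm set0 = 0.
Proof. by rewrite /cm set0X measure0 mule0. Qed.

Let cm_ge0 B : 0 <= cm B.
Proof. by rewrite /cm mule_ge0// lee_fin invr_ge0 fine_ge0. Qed.

Let mb : measurable [set b].
Proof. by []. Qed.

Let cm_sigma_additive : semi_sigma_additive cm.
Proof.
move=> F mF tF mUF.
rewrite /cm [X in X @ \oo --> _](_ : _ =
    (fun n => ((fine (D ([set: X] `*` [set b])))^-1)%:E *
       \sum_(0 <= i < n) D (F i `*` [set b]))); last first.
  by apply/funext => k; rewrite ge0_sume_distrr// => i _; exact: measure_ge0.
have [->|r0] := eqVneq ((fine (D ([set: X] `*` [set b])))^-1)%R 0%R.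
  rewrite mul0e [X in X @ \oo --> _](_ : _ = cst 0); first exact: cvg_cst.
  by under eq_fun do rewrite mul0e.
apply: cvgeZl => //; rewrite setX_bigcupl.
apply: measure_semi_sigma_additive.
- by move=> i; apply: measurableX.
- apply/trivIsetP => i j _ _ ij.
  move/trivIsetP : tF => /(_ i j Logic.I Logic.I ij) H.
  rewrite predeqE => -[x y]; split => //= -[[Fi _] [Fj _]]; have : (F i `&` F j) x by split.
  by rewrite H.
- by rewrite -setX_bigcupl; apply: measurableX.
Qed.

HB.instance Definition _ := isMeasure.Build _ _ _ cm
  cm0 cm_ge0 cm_sigma_additive.

Lemma cm_setT : 0 < D ([set: X] `*` [set b]) -> cm setT = 1.
Proof.
move=> h; rewrite /cm.
have fin : D ([set: X] `*` [set b]) \is a fin_num by rewrite fin_num_measure//; apply: measurableX.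
rewrite -[X in _ * X](fineK fin) -EFinM mulVf //.
by rewrite gt_eqF// -lte_fin fineK.
Qed.

Lemma Dcond_cm A : measurable A -> Dcond D b A = cm A.
Proof.
move=> mA; rewrite /Dcond /cm.
have fin : D (A `*` [set b]) \is a fin_num by rewrite fin_num_measure//; apply: measurableX.
by rewrite -[X in _ = _ * X](fineK fin) -EFinM mulrC.
Qed.

End CondMeasure.

Lemma D_cm {R : realType} {dX : measure_display} {X : measurableType dX}
  (D : probability (X * bool)%type R) (b : bool) A :
  (0 < D ([set: X] `*` [set b]))%E ->
  D (A `*` [set b]) = ((fine (D ([set: X] `*` [set b])))%:E * cm D b A)%E.
Proof.
move=> h; rewrite /cm muleA -EFinM mulfV ?mul1e //.
have fin : D ([set: X] `*` [set b]) \is a fin_num by rewrite fin_num_measure//; apply: measurableX.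
by rewrite gt_eqF// -lte_fin fineK.
Qed.


Lemma inv_small {R : realType} (e : R) : 0 < e -> exists k : nat, (k.+1%:R)^-1 < e.
Proof. move=> e0; exists (Num.Def.truncn e^-1).
have h := truncnS_gt e^-1.
rewrite -[X in _ < X]invrK ltf_pV2 ?posrE ?invr_gt0 //.
Qed.
Lemma cvg_ge_bnd {R : realType} (u : nat -> \bar R) l x :
  u x @[x --> \oo] --> l -> (forall k, (x <= u k)%E) -> (x <= l)%E.
Proof.
move=> H hx; rewrite -(cvg_lim _ H) //; apply: lime_ge; first by apply/cvg_ex; exists l.
by apply: nearW.
Qed.
Lemma cvg_le_bnd {R : realType} (u : nat -> \bar R) l x :
  u x @[x --> \oo] --> l -> (forall k, (u k <= x)%E) -> (l <= x)%E.
Proof.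
move=> H hx; rewrite -(cvg_lim _ H) //; apply: lime_le; first by apply/cvg_ex; exists l.
by apply: nearW.
Qed.

Section Threshold.
Context {R : realType} {dX : measure_display} {X : measurableType dX}.
Variables (mu : {measure set X -> \bar R}) (sc : X -> R).
Hypothesis msc : measurable_fun setT sc.
Hypothesis mu1 : mu setT = 1%E.
Hypothesis atom : forall r, mu (sc @^-1` [set r]) = 0%E.

Definition G (t : R) := mu [set x | t <= sc x].

Lemma mG t : measurable [set x | t <= sc x].
Proof.
have -> : [set x | t <= sc x] = setT `&` sc @^-1` `[t, +oo[%classic.
  by apply/seteqP; split=> x /=; rewrite in_itv/= andbT // => -[].
exact: msc.
Qed.

Lemma G_mono t1 t2 : t1 <= t2 -> (G t2 <= G t1)%E.
Proof.
move=> h; apply: le_measure; rewrite ?inE; try exact: mG.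
by move=> x /= hx; exact: le_trans h hx.
Qed.

Lemma G_le1 t : (G t <= 1)%E.
Proof. by rewrite -mu1; apply: le_measure; rewrite ?inE //; exact: mG. Qed.

Lemma threshold (eps : R) : 0 < eps ->
  (forall t, (G t <= eps%:E)%E) \/
  exists ts, G ts = eps%:E /\ forall t, ts <= t -> (G t <= eps%:E)%E.
Proof.
move=> e0.
have [Hall|] := pselect (forall t, (G t <= eps%:E)%E); first by left.
move=> /existsNP [t0 /negP]; rewrite -ltNge => Ht0; right.
pose A := [set t | (eps%:E < G t)%E].
have [M HM] : exists M : R, (G M < eps%:E)%E.
  apply: contrapT => /forallNP H.
  pose F k : set X := [set x | k%:R <= sc x].
  have cv := @nonincreasing_cvg_mu _ _ _ mu F.
  have cap0 : \bigcap_k F k = set0.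
    apply/seteqP; split=> // x /= Hx.
    have := Hx (Num.Def.truncn (sc x)).+1 Logic.I; rewrite /F /=.
    by rewrite leNgt truncnS_gt.
  have := cv; rewrite cap0 measure0 => /(_ _ (fun k => mG _) measurable0).
  have Flt : (mu (F 0%N) < +oo)%E by apply: (le_lt_trans (G_le1 0)); rewrite ltey.
  move=> /(_ Flt).
  have ni : nonincreasing_seq F.
    by move=> i j ij; apply/subsetPset => x /=; apply: le_trans; rewrite ler_nat.
  move=> /(_ ni) cv0.
  have Hk : forall k, (eps%:E <= (mu \o F) k)%E.
    by move=> k; have := H k%:R; move/negP; rewrite -leNgt.
  by have := cvg_ge_bnd _ _ _ cv0 Hk; rewrite lee_fin leNgt e0.
have Aub : ubound A M.
  move=> t /= At; rewrite leNgt; apply/negP => Mt.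
  have := G_mono _ _ (ltW Mt); rewrite leNgt => /negP; apply.
  exact: lt_trans HM At.
have hsA : has_sup A by split; [exists t0 | exists M].
pose ts := sup A.
have below t : t < ts -> A t.
  move=> tts; have tsp : 0 < ts - t by rewrite subr_gt0.
  have [e Ae He] := sup_adherent tsp hsA.
  rewrite /A /=; apply: (lt_le_trans Ae); apply: G_mono _ _ _.
  by move: He; rewrite subKr => /ltW.
have above t : ts < t -> (G t <= eps%:E)%E.
  move=> tst; rewrite leNgt; apply/negP => At.
  by have := sup_upper_bound hsA At; rewrite leNgt tst.
have Gle : (G ts <= eps%:E)%E.
  pose F k : set X := [set x | ts + (k.+1%:R)^-1 <= sc x].
  have mF k : measurable (F k) by exact: mG.
  have cupE : \bigcup_k F k = [set x | ts < sc x].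
    apply/seteqP; split=> x /=.
      by move=> [k _]; rewrite /F /=; apply: lt_le_trans; rewrite ltrDl invr_gt0.
    move=> h; have hp : 0 < sc x - ts by rewrite subr_gt0.
    have [k hk] := inv_small _ hp.
    by exists k => //; rewrite /F /= -lerBrDl ltW.
  have mcup : measurable (\bigcup_k F k) by exact: bigcupT_measurable.
  have nd : nondecreasing_seq F.
    move=> i j ij; apply/subsetPset => x /=; apply: le_trans; rewrite lerD2l.
    by rewrite lef_pV2 ?posrE // ler_nat.
  have cv := nondecreasing_cvg_mu (mu:=mu) mF mcup nd.
  have hk : forall k, ((mu \o F) k <= eps%:E)%E.
    by move=> k; apply: above; rewrite ltrDl invr_gt0.
  have lt_le := cvg_le_bnd _ _ _ cv hk.
  rewrite cupE in lt_le mcup.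
  have m1 : measurable (sc @^-1` [set ts]).
    by rewrite -[X in measurable X]setTI; apply: msc.
  have sub : [set x | ts <= sc x] `<=` [set x | ts < sc x] `|` sc @^-1` [set ts].
    by move=> x /=; rewrite le_eqVlt => /orP [/eqP ->|]; [right|left].
  apply: le_trans (le_measure _ _ _ sub) _; rewrite ?inE; first exact: mG.
    exact: measurableU.
  apply: (le_trans (measureU2 mu mcup m1)); 
  have a0 : (mu (sc @^-1` [set ts]) = 0)%E by exact: atom.
  by rewrite [X in (_ + X <= _)%E]a0 adde0.
have Gge : (eps%:E <= G ts)%E.
  pose F k : set X := [set x | ts - (k.+1%:R)^-1 <= sc x].
  have mF k : measurable (F k) by exact: mG.
  have capE : \bigcap_k F k = [set x | ts <= sc x].
    apply/seteqP; split=> x /=; last first.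
      by move=> h k _; rewrite /F /=; apply: le_trans h; rewrite gerBl invr_ge0.
    move=> h; rewrite leNgt; apply/negP => lt.
    have hp : 0 < ts - sc x by rewrite subr_gt0.
    have [k hk] := inv_small _ hp.
    by have := h k Logic.I; rewrite /F /= lerBlDr -lerBlDl leNgt hk.
  have mcap : measurable (\bigcap_k F k) by exact: bigcapT_measurable.
  have ni : nonincreasing_seq F.
    move=> i j ij; apply/subsetPset => x /=; apply: le_trans; rewrite lerD2l lerN2.
    by rewrite lef_pV2 ?posrE // ler_nat.
  have Flt : (mu (F 0%N) < +oo)%E by apply: (le_lt_trans (G_le1 _)); rewrite ltey.
  have cv := nonincreasing_cvg_mu Flt mF mcap ni.
  have hk : forall k, (eps%:E <= (mu \o F) k)%E.
    by move=> k; apply/ltW/below; rewrite gtrBl invr_gt0.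
  by have := cvg_ge_bnd _ _ _ cv hk; rewrite capE.
exists ts; split; first exact/le_anti/andP.
move=> t; rewrite le_eqVlt => /orP [/eqP <-|]; last exact: above.
exact: Gle.
Qed.
End Threshold.


Lemma sum_card {R : realType} (n k : nat) (f : nat -> R) :
  \sum_(S : {set 'I_n} | (#|S| <= k)%N) f #|S| =
  \sum_(i < k.+1) ('C(n, i))%:R * f i.
Proof.
transitivity (\sum_(S : {set 'I_n}) \sum_(i < k.+1 | #|S| == i) f i).
  rewrite big_mkcond; apply: eq_bigr => S _; case: (leqP #|S| k) => h.
    have hS : (#|S| < k.+1)%N by exact: h.
    by rewrite (big_pred1 (Ordinal hS)).
  rewrite big_pred0 //.
  move=> i /=; case: eqP => // hi.
  by have := ltn_ord i; rewrite -hi ltnNge h.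
under eq_bigr do rewrite big_mkcond.
rewrite exchange_big /=; apply: eq_bigr => i _.
rewrite -big_mkcond /= sumr_const mulr_natl; congr (_ *+ _).
have := card_draws 'I_n i; rewrite card_ord => <-.
by apply: eq_card => S; rewrite !inE.
Qed.

Lemma prod_ifS {R : realType} (n : nat) (S : {set 'I_n}) (p q : R) :
  \prod_(i < n) (if i \in S then p else q) = p ^+ #|S| * q ^+ (n - #|S|).
Proof.
rewrite (bigID (fun i => i \in S)) /=.
rewrite (eq_bigr (fun=> p)); last by move=> i ->.
rewrite [X in _ * X](eq_bigr (fun=> q)); last by move=> i /negbTE ->.
rewrite prodr_const; congr (_ * _).
rewrite (eq_bigl (fun i => i \in ~: S)); last by move=> i; rewrite !inE.
rewrite prodr_const; congr (_ ^+ _).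
have := cardsC S; rewrite card_ord => h. by rewrite -[X in (X - _)%N]h addKn.
Qed.

Section Binom.
Context {R : realType} {dX : measure_display} {X : measurableType dX}.
Context {dO : measure_display} {Omega : measurableType dO}.
Variables (P : probability Omega R) (n : nat) (Z : 'I_n -> Omega -> X).
Variables (mu : {measure set X -> \bar R}).
Hypothesis mu1 : mu setT = 1%E.
Hypothesis mZ : forall i, measurable_fun setT (Z i).
Hypothesis iid : forall A : 'I_n -> set X, (forall i, measurable (A i)) ->
  P (\bigcap_(i in [set: 'I_n]) (Z i @^-1` A i)) = (\prod_(i < n) mu (A i))%E.
Variables (U : set X) (p : R).
Hypothesis mU : measurable U.
Hypothesis muU : mu U = p%:E.

Definition cnt (w : Omega) : nat := #|[set i : 'I_n | `[< U (Z i w) >]]%SET|.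

Let ES (S : {set 'I_n}) : set Omega :=
  \bigcap_(i in [set: 'I_n]) (Z i @^-1` (if i \in S then U else ~` U)).

Let ES_eq S w : ES S w -> [set i : 'I_n | `[< U (Z i w) >]]%SET = S.
Proof.
move=> H; apply/finset.setP => i; rewrite inE; have := H i Logic.I.
by case: (i \in S) => /= h; [apply/asboolP | apply/asboolP].
Qed.

Let ES_self w : ES [set i : 'I_n | `[< U (Z i w) >]]%SET w.
Proof. by move=> i _ /=; rewrite inE; case: (asboolP (U (Z i w))). Qed.

Let mES S : measurable (ES S).
Proof.
apply: fin_bigcap_measurable; first exact: finite_finset.
move=> i _; rewrite -[X in measurable X]setTI; apply: mZ => //.
by case: (i \in S) => //; apply: measurableC.
Qed.

Let muC : mu (~` U) = (1 - p)%:E.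
Proof.
have : mu (U `|` ~` U) = (mu U + mu (~` U))%E.
  by apply: measureU => //; [exact: measurableC | rewrite setICr].
rewrite setUCr mu1 muU.
have fin : mu (~` U) \is a fin_num.
  rewrite ge0_fin_numE //; apply: (le_lt_trans (y := 1%E)); last by rewrite ltey.
  by rewrite -mu1; apply: le_measure; rewrite ?inE //; exact: measurableC.
rewrite -(fineK fin) -EFinD => /eqP; rewrite eqe => /eqP ->.
by rewrite addrC addKr.
Qed.

Let PES S : P (ES S) = (p ^+ #|S| * (1 - p) ^+ (n - #|S|))%:E.
Proof.
rewrite /ES iid; last by move=> i; case: (i \in S) => //; exact: measurableC.
rewrite -prod_ifS -prodEFin; apply: eq_bigr => i _.
by case: (i \in S).
Qed.

Lemma binom_event (k : nat) :
  measurable [set w | (cnt w <= k)%N] /\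
  P [set w | (cnt w <= k)%N] = (binom_cdf n p k)%:E.
Proof.
pose Dk := [set S : {set 'I_n} | (#|S| <= k)%N].
have E : [set w | (cnt w <= k)%N] = \bigcup_(S in Dk) ES S.
  apply/seteqP; split=> w /=.
    by move=> h; exists [set i : 'I_n | `[< U (Z i w) >]]%SET => //.
  by move=> [S DS HS]; rewrite /cnt (ES_eq _ _ HS).
have fD : finite_set Dk by exact: finite_finset.
have mD : forall S, Dk S -> measurable (ES S) by move=> S _; exact: mES.
rewrite E; split; first exact: fin_bigcup_measurable.
rewrite measure_fin_bigcup //; last first.
  apply/trivIsetP => S S' _ _ SS'; apply/seteqP; split=> // w [h1 h2].
  by move/eqP: SS'; apply; rewrite -(ES_eq _ _ h1) -(ES_eq _ _ h2).
transitivity (\sum_(S : {set 'I_n}) (if (#|S| <= k)%N then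
   (p ^+ #|S| * (1 - p) ^+ (n - #|S|))%:E else 0))%E.
  rewrite fsbig_mkcond (fsbigE (enum {: {set 'I_n}})) //; last first.
  - by move=> S _; rewrite mem_enum.
  - exact: enum_uniq.
  rewrite (eq_bigl xpredT); last by move=> S; rewrite in_setT.
  rewrite big_enum /=; apply: eq_bigr => S _; rewrite /patch.
  case: (boolP (S \in Dk)) => [/set_mem h|/negP h]; rewrite /Dk /= in h.
    by rewrite PES h.
  have h2 : ~~ (#|S| <= k)%N by apply/negP => h'; apply: h; apply/mem_set.
  by rewrite (negbTE h2).
rewrite -big_mkcond /= sumEFin (sum_card n k (fun i => p ^+ i * (1 - p) ^+ (n - i))) /binom_cdf big_mkord.
by congr (_%:E); apply: eq_bigr => i _; rewrite mulrA.
Qed.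

End Binom.


Lemma card_count {n : nat} (P : pred 'I_n) : #|[set i | P i]%SET| = count P (enum 'I_n).
Proof.
rewrite enumT cardE /enum_mem size_filter; apply: eq_count => i; by rewrite !inE.
Qed.

Lemma fp_bound {R : realType} {dX : measure_display} {X : measurableType dX}
  {dO : measure_display} {Omega : measurableType dO}
  (P : probability Omega R) (n : nat) (Z : 'I_n -> Omega -> X)
  (mu : {measure set X -> \bar R}) (sc : X -> R) (eps delta : R) :
  measurable_fun setT sc -> mu setT = 1%E ->
  (forall r, mu (sc @^-1` [set r]) = 0%E) ->
  (forall i, measurable_fun setT (Z i)) ->
  (forall A : 'I_n -> set X, (forall i, measurable (A i)) ->
    P (\bigcap_(i in [set: 'I_n]) (Z i @^-1` A i)) = (\prod_(i < n) mu (A i))%E) ->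
  0 < eps -> 0 <= delta ->
  exists Bad : set Omega, measurable Bad /\ (P Bad <= delta%:E)%E /\
    forall w, ~ Bad w ->
      (mu [set x | (tau_fp sc (fun i => Z i w) eps delta <= (sc x)%:E)%E] <= eps%:E)%E.
Proof.
move=> msc mu1 atom mZ iid e0 d0.
have [J0|Jpos] := eqVneq (kstar1 n eps delta) 0%N.
  exists set0; split=> //; split; first by rewrite measure0 lee_fin.
  move=> w _; rewrite /tau_fp J0 /=.
  have -> : [set x | (+oo <= (sc x)%:E)%E] = set0.
    by apply/seteqP; split=> x //=; rewrite leNgt ltey.
  by rewrite measure0 lee_fin ltW.
have HJ : binom_cdf n eps ((kstar1 n eps delta)%:Z - 1) <= delta.
  by case: (kstar1P n eps delta) => // h; rewrite h eqxx in Jpos.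
move: Jpos HJ; rewrite /tau_fp; case: (kstar1 n eps delta) => // J' _.
have -> : (J'.+1%:Z - 1 = J'%:Z)%R by rewrite -addn1 PoszD addrK.
move=> HJ /=.
case: (threshold _ _ msc mu1 atom _ e0) => [Hall|[ts [Gts Hts]]].
  exists set0; split=> //; split; first by rewrite measure0 lee_fin.
  move=> w _; exact: Hall.
pose U := [set x | ts <= sc x].
have [mB PB] := binom_event P n Z mu mu1 mZ iid U eps (mG _ msc ts) Gts J'.
exists [set w | (cnt n Z U w <= J')%N]; split=> //; split; first by rewrite PB lee_fin.
move=> w /negP; rewrite -ltnNge => HB.
apply: Hts; apply: (nth_sort_ge _ ts J'.+1) => //.
rewrite count_map -card_count.
suff -> : [set i | preim (fun i => sc (Z i w)) (fun x => ts <= x) i]%SET =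
          [set i : 'I_n | `[< U (Z i w) >]]%SET by [].
by apply/finset.setP => i; rewrite !inE asboolb.
Qed.


Section MeasSets.
Context {R : realType} {dX : measure_display} {X : measurableType dX}.
Variables (sc : X -> R).
Hypothesis msc : measurable_fun setT sc.

Lemma mle_set (e : \bar R) : measurable [set x | (e <= (sc x)%:E)%E].
Proof.
case: e => [r| |].
- have -> : [set x | (r%:E <= (sc x)%:E)%E] = [set x | r <= sc x].
    by apply/seteqP; split=> x /=; rewrite lee_fin.
  exact: mG.
- have -> : [set x | (+oo <= (sc x)%:E)%E] = set0.
    by apply/seteqP; split=> x //=; rewrite leNgt ltey.
  exact: measurable0.
- have -> : [set x | (-oo <= (sc x)%:E)%E] = setT.
    by apply/seteqP; split=> x //=; rewrite leNye.
  exact: measurableT.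
Qed.

Lemma mlt_set (e : \bar R) : measurable [set x | ((sc x)%:E < e)%E].
Proof.
have -> : [set x | ((sc x)%:E < e)%E] = ~` [set x | (e <= (sc x)%:E)%E].
  by apply/seteqP; split=> x /=; rewrite ltNge => /negP.
exact/measurableC/mle_set.
Qed.
End MeasSets.

Lemma nth_mapN {R : realType} (l : seq R) (i : nat) :
  nth 0 [seq - x | x <- l] i = - nth 0 l i.
Proof.
case: (ltnP i (size l)) => h; first by rewrite (nth_map 0).
by rewrite !nth_default ?size_map // oppr0.
Qed.

Lemma tau_fnE {R : realType} {dX : measure_display} {X : measurableType dX}
  (sc : X -> R) (m : nat) (xs : 'I_m -> X) (eps delta : R) :
  tau_fn sc xs eps delta = (- tau_fp (fun x => (- sc x)%R) xs eps delta)%E.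
Proof.
rewrite /tau_fn /tau_fp /kth_smallest /kth_largest.
case: (kstar1 m eps delta) => [//|J] /=.
have -> : [seq - sc (xs i) | i <- enum 'I_m] =
  [seq - x | x <- [seq sc (xs i) | i <- enum 'I_m]].
  by elim: (enum 'I_m) => //= a l ->.
rewrite [in RHS]sort_map nth_mapN opprK; congr (_%:E); congr (nth _ _ _).
apply: (sorted_eq (leT := fun x y : R => (x <= y)%R)).
- by move=> x y z; apply: le_trans.
- by move=> x y h; apply: le_anti.
- by apply: sort_sorted => x y; rewrite le_total.
- have h : (relpre (fun x:R => (- x)%R) (fun x y : R => (y <= x)%R)) =2 (fun x y : R => (x <= y)%R).
    by move=> x y; rewrite /= lerN2.
  rewrite -(eq_sorted h); apply: sort_sorted => x y; rewrite /= !lerN2 le_total.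
- by [].
by apply/permP => p; rewrite !count_sort.
Qed.

Lemma fn_bound {R : realType} {dX : measure_display} {X : measurableType dX}
  {dO : measure_display} {Omega : measurableType dO}
  (P : probability Omega R) (n : nat) (Z : 'I_n -> Omega -> X)
  (mu : {measure set X -> \bar R}) (sc : X -> R) (eps delta : R) :
  measurable_fun setT sc -> mu setT = 1%E ->
  (forall r, mu (sc @^-1` [set r]) = 0%E) ->
  (forall i, measurable_fun setT (Z i)) ->
  (forall A : 'I_n -> set X, (forall i, measurable (A i)) ->
    P (\bigcap_(i in [set: 'I_n]) (Z i @^-1` A i)) = (\prod_(i < n) mu (A i))%E) ->
  0 < eps -> 0 <= delta ->
  exists Bad : set Omega, measurable Bad /\ (P Bad <= delta%:E)%E /\
    forall w, ~ Bad w ->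
      (mu [set x | ((sc x)%:E < tau_fn sc (fun i => Z i w) eps delta)%E] <= eps%:E)%E.
Proof.
move=> msc mu1 atom mZ iid e0 d0.
have msc' : measurable_fun setT (fun x => - sc x) by exact: measurable_funN.
have atom' : forall r, mu ((fun x => - sc x) @^-1` [set r]) = 0%E.
  move=> r; have -> : (fun x => - sc x) @^-1` [set r] = sc @^-1` [set - r].
    by apply/seteqP; split=> x /= h; [rewrite -h opprK | rewrite h opprK].
  exact: atom.
have [Bad [mB [PB H]]] := fp_bound P n Z mu (fun x => - sc x) eps delta msc' mu1 atom' mZ iid e0 d0.
exists Bad; split=> //; split=> // w nB.
rewrite tau_fnE; apply: le_trans (H w nB).
apply: le_measure; rewrite ?inE; [exact: mlt_set | exact: mle_set |].
by move=> x /=; rewrite lteNr => /ltW.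
Qed.


Lemma neq_set (A B : {set bool}) (y : bool) : (y \in A) != (y \in B) -> (A == B) = false.
Proof. by move=> h; apply/negbTE/eqP => E; move: h; rewrite E eqxx. Qed.

Lemma yhatE {R : realType} {dX : measure_display} {X : measurableType dX}
  (sc : X -> R) (tfn tfp : \bar R) (x : X) :
  yhat_ad sc tfn tfp x =
  if (tfp <= (sc x)%:E)%E && (tfn <= (sc x)%:E)%E then Some true
  else if ~~ (tfp <= (sc x)%:E)%E && ~~ (tfn <= (sc x)%:E)%E then Some false
  else None.
Proof.
rewrite /yhat_ad /C_ad /C_fn /C_fp.
case: (tfp <= (sc x)%:E)%E; case: (tfn <= (sc x)%:E)%E => /=.
- by rewrite finset.setTI eqxx.
- rewrite (neq_set _ _ true) ?inE //.
  by rewrite (neq_set _ _ false) ?inE //.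
- rewrite (neq_set _ _ false) ?inE //.
  by rewrite (neq_set _ _ true) ?inE //.
- rewrite (neq_set _ _ false) ?inE //.
  by rewrite finset.setIT eqxx.
Qed.

Lemma ERR_le {R : realType} {dX : measure_display} {X : measurableType dX}
  (D : probability (X * bool)%type R) (sc : X -> R) (tfn tfp : \bar R) (e0 e1 : R) :
  measurable_fun setT sc ->
  (0 < D ([set: X] `*` [set false]))%E -> (0 < D ([set: X] `*` [set true]))%E ->
  (cm D false [set x | (tfp <= (sc x)%:E)%E] <= e0%:E)%E ->
  (cm D true [set x | ((sc x)%:E < tfn)%E] <= e1%:E)%E ->
  (ERR D sc tfn tfp <= (fine (D ([set: X] `*` [set false])) * e0 +
                        fine (D ([set: X] `*` [set true])) * e1)%:E)%E.
Proof.
move=> msc c0p c1p h0 h1.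
pose S1 := [set x | (tfp <= (sc x)%:E)%E] `&` [set x | (tfn <= (sc x)%:E)%E].
pose S0 := [set x | ((sc x)%:E < tfp)%E] `&` [set x | ((sc x)%:E < tfn)%E].
have mS1 : measurable S1 by apply: measurableI; exact: mle_set.
have mS0 : measurable S0 by apply: measurableI; exact: mlt_set.
have E : [set p : X * bool | yhat_ad sc tfn tfp p.1 <> None /\
                        yhat_ad sc tfn tfp p.1 <> Some p.2] =
         (S1 `*` [set false]) `|` (S0 `*` [set true]).
  apply/seteqP; split => -[x y] /=; rewrite yhatE /S1 /S0 /= !ltNge;
  case: (tfp <= (sc x)%:E)%E; case: (tfn <= (sc x)%:E)%E; case: y => //=; move=> H; clear -H; intuition congruence.
rewrite /ERR E.
apply: le_trans (measureU2 _ _ _) _; try (apply: measurableX => //).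
rewrite EFinD; apply: leeD.
- apply: (@le_trans _ _ (D ([set x | (tfp <= (sc x)%:E)%E] `*` [set false]))).
    apply: le_measure; rewrite ?inE; try (apply: measurableX => //; exact: mle_set).
    by move=> -[x y] /= [[? _] ?].
  rewrite D_cm // EFinM; apply: lee_wpmul2l => //.
  by rewrite lee_fin fine_ge0.
- apply: (@le_trans _ _ (D ([set x | ((sc x)%:E < tfn)%E] `*` [set true]))).
    apply: le_measure; rewrite ?inE; try (apply: measurableX => //; exact: mlt_set).
    by move=> -[x y] /= [[_ ?] ?].
  rewrite D_cm // EFinM; apply: lee_wpmul2l => //.
  by rewrite lee_fin fine_ge0.
Qed.

Theorem mainTheorem6 (R : realType) (dX : measure_display) (X : measurableType dX)
    (sc : X -> R) (D : probability (X * bool)%type R)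
    (eps_fp delta_fp eps_fn delta_fn : R) (n m : nat)
    (dO : measure_display) (Omega : measurableType dO) (P : probability Omega R)
    (Z : 'I_n -> Omega -> X) (Z' : 'I_m -> Omega -> X) :
  measurable_fun setT sc ->
  (0 < D ([set: X] `*` [set true]))%E -> (D ([set: X] `*` [set true]) < 1)%E ->
  (forall (b : bool) (r : R), Dcond D b (sc @^-1` [set r]) = 0%E) ->
  0 < eps_fp < 1 -> 0 < delta_fp < 1 -> 0 < eps_fn < 1 -> 0 < delta_fn < 1 ->
  (0 < n)%N -> (0 < m)%N ->
  iid_calibration P D Z Z' ->
  exists F : set Omega, measurable F /\
    F `<=` [set w | (tau_fn sc (fun j => Z' j w) eps_fn delta_fn <
                     tau_fp sc (fun i => Z i w) eps_fp delta_fp)%E \/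
                    (ERR D sc (tau_fn sc (fun j => Z' j w) eps_fn delta_fn)
                              (tau_fp sc (fun i => Z i w) eps_fp delta_fp)
                     <= (Num.max eps_fp eps_fn)%:E)%E] /\
    ((1 - (delta_fp + delta_fn))%:E <= P F)%E.
Proof.
move=> msc c1p c1lt atomD /andP[efp0 efp1] /andP[dfp0 dfp1] /andP[efn0 efn1]
  /andP[dfn0 dfn1] n0 m0 [mZ [mZ' hind]].
have mT : measurable ([set: X] `*` [set true]) by apply: measurableX.
have mF : measurable ([set: X] `*` [set false]) by apply: measurableX.
have csum : (D ([set: X] `*` [set false]) + D ([set: X] `*` [set true]) = 1)%E.
  rewrite -measureU //; last first.
    by apply/seteqP; split=> // -[x y] /= [[_ ->] [_ ]].
  rewrite -(probability_setT D); congr (D _).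
  by apply/seteqP; split=> // -[x [|]] _ /=; [right|left].
have fin1 : D ([set: X] `*` [set true]) \is a fin_num by rewrite fin_num_measure.
have fin0 : D ([set: X] `*` [set false]) \is a fin_num by rewrite fin_num_measure.
have c0p : (0 < D ([set: X] `*` [set false]))%E.
  move: csum c1lt; rewrite -(fineK fin1) -(fineK fin0) -EFinD => /eqP.
  rewrite eqe => /eqP h; rewrite !lte_fin; lra.
have mu0T : cm D false setT = 1%E by exact: cm_setT.
have mu1T : cm D true setT = 1%E by exact: cm_setT.
have atom b r : cm D b (sc @^-1` [set r]) = 0%E.
  rewrite -Dcond_cm; first exact: atomD.
  by rewrite -[X in measurable X]setTI; apply: msc.
have capT k (W : 'I_k -> Omega -> X) : \bigcap_(j in [set: 'I_k]) (W j @^-1` setT) = setT.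
  by apply/seteqP; split=> // w _ j _.
have iidZ : forall A : 'I_n -> set X, (forall i, measurable (A i)) ->
    P (\bigcap_(i in [set: 'I_n]) (Z i @^-1` A i)) = (\prod_(i < n) cm D false (A i))%E.
  move=> A mA; have := hind A (fun=> setT) mA (fun=> measurableT).
  rewrite capT setIT => ->.
  rewrite [X in (_ * X)%E]big1 ?mule1; last by move=> j _; rewrite Dcond_cm.
  by apply: eq_bigr => i _; rewrite Dcond_cm.
have iidZ' : forall A : 'I_m -> set X, (forall i, measurable (A i)) ->
    P (\bigcap_(i in [set: 'I_m]) (Z' i @^-1` A i)) = (\prod_(i < m) cm D true (A i))%E.
  move=> A mA; have := hind (fun=> setT) A (fun=> measurableT) mA.
  rewrite capT setTI => ->.
  rewrite [X in (X * _)%E]big1 ?mul1e; last by move=> j _; rewrite Dcond_cm.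
  by apply: eq_bigr => i _; rewrite Dcond_cm.
have [B1 [mB1 [PB1 H1]]] := fp_bound P n Z (cm D false) sc eps_fp delta_fp msc mu0T
  (atom false) mZ iidZ efp0 (ltW dfp0).
have [B2 [mB2 [PB2 H2]]] := fn_bound P m Z' (cm D true) sc eps_fn delta_fn msc mu1T
  (atom true) mZ' iidZ' efn0 (ltW dfn0).
exists (~` (B1 `|` B2)); split; first exact/measurableC/measurableU.
split.
  move=> w /= nB; right.
  have nB1 : ~ B1 w by move=> h; apply: nB; left.
  have nB2 : ~ B2 w by move=> h; apply: nB; right.
  apply: le_trans (ERR_le _ _ _ _ _ _ msc c0p c1p (H1 w nB1) (H2 w nB2)) _.
  rewrite lee_fin.
  move: csum; rewrite -(fineK fin1) -(fineK fin0) -EFinD => /eqP; rewrite eqe => /eqP h.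
  have g0 : 0 <= fine (D ([set: X] `*` [set false])) by rewrite fine_ge0.
  have g1 : 0 <= fine (D ([set: X] `*` [set true])) by rewrite fine_ge0.
  have mx0 : eps_fp <= Num.max eps_fp eps_fn by rewrite le_max lexx.
  have mx1 : eps_fn <= Num.max eps_fp eps_fn by rewrite le_max lexx orbT.
  nra.
rewrite probability_setC; last exact: measurableU.
have fU : P (B1 `|` B2) \is a fin_num by rewrite fin_num_measure //; exact: measurableU.
have hU := measureU2 P mB1 mB2.
have fB1 : P B1 \is a fin_num by rewrite fin_num_measure.
have fB2 : P B2 \is a fin_num by rewrite fin_num_measure.
suff h : ((1 - (delta_fp + delta_fn))%:E <= (1 - fine (P (B1 `|` B2)))%:E)%E.
  by move: h; rewrite [(1 - fine _)%:E]EFinB (fineK fU).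
rewrite lee_fin.
have hU' : fine (P (B1 `|` B2)) <= fine (P B1) + fine (P B2).
  by rewrite -lee_fin EFinD !fineK.
have hP1 : fine (P B1) <= delta_fp by rewrite -lee_fin fineK.
have hP2 : fine (P B2) <= delta_fn by rewrite -lee_fin fineK.
lra.
Qed.
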